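(* In the reachability strategy-improvement algorithm described in the context, let $\gamma_i,\gamma_{i+1}$ be the player-1 selectors obtained at iterations $i$ and $i+1$, let $v_i=\mathrm{val}_1^{\overline{\gamma}_i}(\mathrm{Reach}(T))$, $v_{i+1}=\mathrm{val}_1^{\overline{\gamma}_{i+1}}(\mathrm{Reach}(T))$, and $I=\{s\in S:\mathrm{Pre}_1(v_i)(s)>v_i(s)\}$. Then $v_{i+1}(s)\ge\mathrm{Pre}_1(v_i)(s)$ for all $s\in S$; consequently $v_{i+1}(s)\ge v_i(s)$ for all $s\in S$ and $v_{i+1}(s)>v_i(s)$ for all $s\in I$.
   Context: Concurrent game structure $G=(S,M,\Gamma_1,\Gamma_2,\delta)$: finite states, finite moves, nonempty move sets $\Gamma_i(s)$, $\delta(s,a_1,a_2)\in\mathrm{Distr}(S)$ (simultaneous independent moves). Selectors assign to each state a distribution on available moves; $\overline{\xi}$ is the memoryless strategy playing $\xi$ forever; $\Pr_s^{\pi_1,\pi_2}$ is the induced measure on plays; $\mathrm{Reach}(X)$: plays visiting $X$. $\mathrm{val}_1^{\pi_1}(\mathrm{Reach}(T))(s)=\inf_{\pi_2}\Pr_s^{\pi_1,\pi_2}(\mathrm{Reach}(T))$, $\mathrm{val}_1(\mathrm{Reach}(T))=\sup_{\pi_1}\mathrm{val}_1^{\pi_1}(\mathrm{Reach}(T))$. For a valuation $v:S\to[0,1]$: $\mathrm{Pre}_{\xi_1,\xi_2}(v)(s)=\sum_{a,b}\sum_tv(t)\delta(s,a,b)(t)\xi_1(s)(a)\xi_2(s)(b)$,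 $\mathrm{Pre}_{1:\xi_1}(v)(s)=\inf_{\xi_2}\mathrm{Pre}_{\xi_1,\xi_2}(v)(s)$, $\mathrm{Pre}_1(v)(s)=\sup_{\xi_1}\mathrm{Pre}_{1:\xi_1}(v)(s)$. Fix $T\subseteq S$, $W_2=\{s:\mathrm{val}_1(\mathrm{Reach}(T))(s)=0\}$; all states of $T\cup W_2$ are absorbing. The algorithm: $\gamma_0$ is the uniform selector on $\Gamma_1(s)$, $v_i=\mathrm{val}_1^{\overline{\gamma}_i}(\mathrm{Reach}(T))$. At iteration $i$: $I'=\{s\in S\setminus(T\cup W_2):\mathrm{Pre}_1(v_i)(s)>v_i(s)\}$; $\xi_1$ is a selector with $\mathrm{Pre}_{1:\xi_1}(v_i)(s)=\mathrm{Pre}_1(v_i)(s)$ for $s\in I'$; $\gamma_{i+1}(s)=\gamma_i(s)$ for $s\notin I'$ and $\gamma_{i+1}(s)=\xi_1(s)$ for $s\in I'$; stop when $I'=\emptyset$. *)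

(* Defs.v *)
From mathcomp Require Import all_boot all_order all_algebra.
From mathcomp Require Import all_classical all_reals.
Set Implicit Arguments. Unset Strict Implicit. Unset Printing Implicit Defensive.
Import Order.TTheory GRing.Theory Num.Theory.
Local Open Scope classical_set_scope.
Local Open Scope ring_scope.

Section ConcurrentGames.
Variables (R : realType) (S M : finType).

Definition is_distr_on (A : {set M}) (d : {ffun M -> R}) : Prop :=
  [/\ forall a, 0 <= d a, forall a, a \notin A -> d a = 0 & \sum_a d a = 1].

Definition is_pdistr (d : {ffun S -> R}) : Prop :=
  (forall t, 0 <= d t) /\ \sum_t d t = 1.

(* Strategies: a history s0 s1 ... sk is represented as (s0, [:: s1; ...; sk]);
   the current state is [last s0 h].  Strategies are history-dependent and randomized. *)
Definition strategy := S -> seq S -> {ffun M -> R}.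
Definition is_strategy (G : S -> {set M}) (pi : strategy) : Prop :=
  forall s0 h, is_distr_on (G (last s0 h)) (pi s0 h).

Definition selector := S -> {ffun M -> R}.
Definition is_selector (G : S -> {set M}) (xi : selector) : Prop :=
  forall s, is_distr_on (G s) (xi s).
Definition memoryless (xi : selector) : strategy := fun s0 h => xi (last s0 h).

Variables (G1 G2 : S -> {set M}) (delta : S -> M -> M -> {ffun S -> R}) (T : {set S}).

(* Probability, under pi1/pi2 from history (s0,h), of visiting T within n further steps
   (the current state counts). *)
Fixpoint reachn (pi1 pi2 : strategy) (n : nat) (s0 : S) (h : seq S) : R :=
  let s := last s0 h in
  if s \in T then 1 else
  match n with
  | 0 => 0
  | n'.+1 => \sum_a \sum_b (pi1 s0 h a * pi2 s0 h b *
              \sum_t (delta s a b t * reachn pi1 pi2 n' s0 (rcons h t)))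
  end.

(* Pr_s^{pi1,pi2}(Reach T) = limit (= sup) of the finite-horizon probabilities
   (continuity from below of the induced measure). *)
Definition reach_prob (pi1 pi2 : strategy) (s : S) : R :=
  sup (range (fun n => reachn pi1 pi2 n s [::])).

Definition val1_strat (pi1 : strategy) (s : S) : R :=
  inf [set reach_prob pi1 pi2 s | pi2 in [set p | is_strategy G2 p]].

Definition val1 (s : S) : R :=
  sup [set val1_strat pi1 s | pi1 in [set p | is_strategy G1 p]].

Definition Pre (xi1 xi2 : selector) (v : S -> R) (s : S) : R :=
  \sum_a \sum_b \sum_t v t * delta s a b t * xi1 s a * xi2 s b.

Definition Pre1_sel (xi1 : selector) (v : S -> R) (s : S) : R :=
  inf [set Pre xi1 xi2 v s | xi2 in [set x | is_selector G2 x]].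

Definition Pre1 (v : S -> R) (s : S) : R :=
  sup [set Pre1_sel xi1 v s | xi1 in [set x | is_selector G1 x]].

Definition inW2 (s : S) : bool := val1 s == 0.

Definition uniform_sel : selector :=
  fun s => [ffun a => if a \in G1 s then (#|G1 s|%:R)^-1 else 0].

Definition vsel (g : selector) : S -> R := val1_strat (memoryless g).

Definition inI' (g : selector) (s : S) : bool :=
  [&& s \notin T, ~~ inW2 s & vsel g s < Pre1 (vsel g) s].

Definition improve_step (g g' : selector) : Prop :=
  exists xi1 : selector,
    [/\ is_selector G1 xi1,
        forall s, inI' g s -> Pre1_sel xi1 (vsel g) s = Pre1 (vsel g) s &
        forall s, g' s = if inI' g s then xi1 s else g s].

End ConcurrentGames.

(* Main.v *)
Require Import Defs.
From mathcomp Require Import all_boot all_order all_algebra.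
From mathcomp Require Import all_classical all_reals.
From mathcomp Require Import ring lra.
Import Order.TTheory GRing.Theory Num.Theory.
Local Open Scope classical_set_scope.
Local Open Scope ring_scope.
Set Implicit Arguments. Unset Strict Implicit. Unset Printing Implicit Defensive.

Section SupInf.
Variable R : realType.
Lemma sup_im_le {I : Type} (P : set I) (F : I -> R) c :
  (exists x, P x) -> (forall x, P x -> F x <= c) -> sup [set F x | x in P] <= c.
Proof.
move=> [x Px] H; apply: ge_sup; first by exists (F x), x.
by move=> _ [y Py <-]; apply: H.
Qed.
Lemma le_sup_im {I : Type} (P : set I) (F : I -> R) B x :
  (forall x, P x -> F x <= B) -> P x -> F x <= sup [set F x | x in P].
Proof.
move=> H Px; apply: ub_le_sup; last by exists x.
by exists B => _ [y Py <-]; apply: H.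
Qed.
Lemma inf_im_ge {I : Type} (P : set I) (F : I -> R) c :
  (exists x, P x) -> (forall x, P x -> c <= F x) -> c <= inf [set F x | x in P].
Proof.
move=> [x Px] H; apply: lb_le_inf; first by exists (F x), x.
by move=> _ [y Py <-]; apply: H.
Qed.
Lemma inf_im_le {I : Type} (P : set I) (F : I -> R) B x :
  (forall x, P x -> B <= F x) -> P x -> inf [set F x | x in P] <= F x.
Proof.
move=> H Px; apply: ge_inf; last by exists x.
by exists B => _ [y Py <-]; apply: H.
Qed.
Lemma inf_im_lt {I : Type} (P : set I) (F : I -> R) e :
  (exists x, P x) -> 0 < e -> exists x, P x /\ F x < inf [set F x | x in P] + e.
Proof.
move=> [x Px] e0.
have : inf [set F x | x in P] < inf [set F x | x in P] + e by rewrite ltrDl.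
move/inf_lt => [|_ [y Py <-] Hy]; first by exists (F x), x.
by exists y.
Qed.
End SupInf.

Section Dev.
Variables (R : realType) (S M : finType).
Variables (G1 G2 : S -> {set M}) (delta : S -> M -> M -> {ffun S -> R}) (T : {set S}).
Hypothesis HG1 : forall s, G1 s != finset.set0.
Hypothesis HG2 : forall s, G2 s != finset.set0.
Hypothesis Hdelta : forall s a b, a \in G1 s -> b \in G2 s -> is_pdistr (delta s a b).

Lemma distr_ge0 A (x : {ffun M -> R}) a : is_distr_on A x -> 0 <= x a.
Proof. by case. Qed.
Lemma distr_out A (x : {ffun M -> R}) a : is_distr_on A x -> a \notin A -> x a = 0.
Proof. by case=> _ H _; apply: H. Qed.
Lemma distr_sum A (x : {ffun M -> R}) : is_distr_on A x -> \sum_a x a = 1.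
Proof. by case. Qed.
Lemma distr_le1 A (x : {ffun M -> R}) a : is_distr_on A x -> x a <= 1.
Proof.
move=> Hx; rewrite -(distr_sum Hx) (bigD1 a) //= lerDl.
by apply: sumr_ge0 => i _; apply: distr_ge0 Hx.
Qed.

Definition wsum (s : S) (x y : {ffun M -> R}) (X : S -> R) :=
  \sum_a \sum_b (x a * y b * \sum_t (delta s a b t * X t)).

Lemma wsum_le s x y X Y : is_distr_on (G1 s) x -> is_distr_on (G2 s) y ->
  (forall t, X t <= Y t) -> wsum s x y X <= wsum s x y Y.
Proof.
move=> Hx Hy XY; apply: ler_sum => a _; apply: ler_sum => b _.
have [aG|aG] := boolP (a \in G1 s); last by rewrite (distr_out Hx aG) !mul0r.
have [bG|bG] := boolP (b \in G2 s); last by rewrite (distr_out Hy bG) !mulr0 !mul0r.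
apply: ler_wpM2l; first by rewrite mulr_ge0 // (distr_ge0 _ Hx, distr_ge0 _ Hy).
apply: ler_sum => t _; apply: ler_wpM2l => //.
by case: (Hdelta aG bG) => H _; apply: H.
Qed.

Lemma wsum_const s x y c : is_distr_on (G1 s) x -> is_distr_on (G2 s) y ->
  wsum s x y (fun _ => c) = c.
Proof.
move=> Hx Hy.
transitivity (\sum_a \sum_b (x a * y b * c)).
  apply: eq_bigr => a _; apply: eq_bigr => b _.
  have [aG|aG] := boolP (a \in G1 s); last by rewrite (distr_out Hx aG) !mul0r.
  have [bG|bG] := boolP (b \in G2 s); last by rewrite (distr_out Hy bG) !mulr0 !mul0r.
  by rewrite -big_distrl /=; case: (Hdelta aG bG) => _ ->; rewrite mul1r.
under eq_bigr do rewrite -big_distrl /=.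
rewrite -big_distrl /= -[RHS]mul1r; congr (_ * _).
rewrite -(distr_sum Hx); apply: eq_bigr => a _.
by rewrite -big_distrr /= (distr_sum Hy) mulr1.
Qed.

Lemma wsum_lin s x y X Y (al bt : R) :
  wsum s x y (fun t => al * X t + bt * Y t) = al * wsum s x y X + bt * wsum s x y Y.
Proof.
rewrite /wsum !big_distrr -big_split; apply: eq_bigr => a _ /=.
rewrite !big_distrr -big_split; apply: eq_bigr => b _ /=.
rewrite !big_distrr /= -big_split /=.
by apply: eq_bigr => t _; ring.
Qed.

Lemma wsum_add s x y X Y :
  wsum s x y X + wsum s x y Y = wsum s x y (fun t => X t + Y t).
Proof.
rewrite /wsum -big_split; apply: eq_bigr => a _ /=.
rewrite -big_split; apply: eq_bigr => b _ /=.
rewrite -mulrDr -big_split /=.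
by congr (_ * _); apply: eq_bigr => t _; rewrite mulrDr.
Qed.

Lemma wsum_ge0 s x y X : is_distr_on (G1 s) x -> is_distr_on (G2 s) y ->
  (forall t, 0 <= X t) -> 0 <= wsum s x y X.
Proof.
by move=> Hx Hy H; rewrite -(wsum_const 0 Hx Hy); apply: wsum_le.
Qed.

Lemma wsum_le1 s x y X : is_distr_on (G1 s) x -> is_distr_on (G2 s) y ->
  (forall t, X t <= 1) -> wsum s x y X <= 1.
Proof.
by move=> Hx Hy H; rewrite -(wsum_const 1 Hx Hy); apply: wsum_le.
Qed.

Lemma Pre_wsum xi1 xi2 v s :
  Pre delta xi1 xi2 v s = wsum s (xi1 s) (xi2 s) v.
Proof.
apply: eq_bigr => a _; apply: eq_bigr => b _ /=.
rewrite big_distrr; apply: eq_bigr => t _ /=; ring.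
Qed.


Hypothesis Habs : forall s, (s \in T) || inW2 G1 G2 delta T s ->
            forall a b, a \in G1 s -> b \in G2 s -> delta s a b s = 1.

Definition inU s := (s \notin T) && ~~ inW2 G1 G2 delta T s.

Lemma uniform_distr (G : S -> {set M}) s : G s != finset.set0 ->
  is_distr_on (G s) (uniform_sel R G s).
Proof.
move=> Hne; have cpos : (0 < #|G s|)%N by rewrite card_gt0.
split.
- by move=> a; rewrite ffunE; case: ifP => // _; rewrite invr_ge0 ler0n.
- by move=> a Ha; rewrite ffunE (negbTE Ha).
rewrite (bigID (fun a => a \in G s)) /=.
rewrite [X in _ + X]big1 ?addr0; last by move=> a /negbTE Ha; rewrite ffunE Ha.
under eq_bigr => a Ha do rewrite ffunE Ha.
by rewrite sumr_const -[LHS]mulr_natr mulVf // pnatr_eq0 -lt0n.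
Qed.

Lemma uniform_sel_ok (G : S -> {set M}) : (forall s, G s != finset.set0) ->
  is_selector G (uniform_sel R G).
Proof. by move=> H s; apply: uniform_distr. Qed.

Lemma memoryless_ok G (xi : selector R S M) : is_selector G xi -> is_strategy G (memoryless xi).
Proof. by move=> H s0 h; apply: H. Qed.

Lemma reachnS p1 p2 n s0 h : reachn delta T p1 p2 n.+1 s0 h =
  if last s0 h \in T then 1 else
  wsum (last s0 h) (p1 s0 h) (p2 s0 h) (fun t => reachn delta T p1 p2 n s0 (rcons h t)).
Proof. by []. Qed.

Lemma reachn_bnd p1 p2 n s0 h : is_strategy G1 p1 -> is_strategy G2 p2 ->
  0 <= reachn delta T p1 p2 n s0 h <= 1.
Proof.
move=> H1 H2; elim: n h => [|n IH] h.
  by rewrite /=; case: ifP => _; rewrite ?lexx ?ler01.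
rewrite reachnS; case: ifP => _; first by rewrite ler01 lexx.
by rewrite wsum_ge0 ?wsum_le1 // => t; case/andP: (IH (rcons h t)).
Qed.

Lemma reachn_le_prob p1 p2 n s : is_strategy G1 p1 -> is_strategy G2 p2 ->
  reachn delta T p1 p2 n s [::] <= reach_prob delta T p1 p2 s.
Proof.
move=> H1 H2; apply: (@le_sup_im _ _ setT (fun n => reachn delta T p1 p2 n s [::]) 1) => //.
by move=> k _; case/andP: (reachn_bnd k s [::] H1 H2).
Qed.

Lemma reach_prob_bnd p1 p2 s : is_strategy G1 p1 -> is_strategy G2 p2 ->
  0 <= reach_prob delta T p1 p2 s <= 1.
Proof.
move=> H1 H2; apply/andP; split.
  apply: le_trans (reachn_le_prob 0 s H1 H2).
  by case/andP: (reachn_bnd 0 s [::] H1 H2).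
apply: sup_im_le; first by exists 0%N.
by move=> k _; case/andP: (reachn_bnd k s [::] H1 H2).
Qed.

Definition u2 := memoryless (uniform_sel R G2).
Lemma u2_ok : is_strategy G2 u2.
Proof. by apply/memoryless_ok/uniform_sel_ok. Qed.

Lemma val1_strat_bnd p1 s : is_strategy G1 p1 ->
  0 <= val1_strat G2 delta T p1 s <= 1.
Proof.
move=> H1; apply/andP; split.
  apply: inf_im_ge; first by exists u2; apply: u2_ok.
  by move=> p H2; case/andP: (reach_prob_bnd s H1 H2).
apply: le_trans (@inf_im_le _ _ _ _ 0 u2 _ u2_ok) _.
  by move=> p H2; case/andP: (reach_prob_bnd s H1 H2).
by case/andP: (reach_prob_bnd s H1 u2_ok).
Qed.

Lemma val1_strat_le_prob p1 p2 s : is_strategy G1 p1 -> is_strategy G2 p2 ->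
  val1_strat G2 delta T p1 s <= reach_prob delta T p1 p2 s.
Proof.
move=> H1 H2; apply: (@inf_im_le _ _ _ _ 0) => // p H.
by case/andP: (reach_prob_bnd s H1 H).
Qed.

Definition u1 := memoryless (uniform_sel R G1).
Lemma u1_ok : is_strategy G1 u1.
Proof. by apply/memoryless_ok/uniform_sel_ok. Qed.

Lemma val1_bnd s : 0 <= Defs.val1 G1 G2 delta T s <= 1.
Proof.
apply/andP; split.
  apply: le_trans (@le_sup_im _ _ _ _ 1 u1 _ u1_ok).
    by case/andP: (val1_strat_bnd s u1_ok).
  by move=> p H; case/andP: (val1_strat_bnd s H).
apply: sup_im_le; first by exists u1; apply: u1_ok.
by move=> p H; case/andP: (val1_strat_bnd s H).
Qed.

Lemma vsel_bnd g s : is_selector G1 g -> 0 <= vsel G2 delta T g s <= 1.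
Proof. by move=> H; apply: val1_strat_bnd; apply: memoryless_ok. Qed.

Lemma vsel_le_val1 g s : is_selector G1 g -> vsel G2 delta T g s <= Defs.val1 G1 G2 delta T s.
Proof.
move=> H; apply: (@le_sup_im _ _ _ (fun p => val1_strat G2 delta T p s) 1).
  by move=> p Hp; case/andP: (val1_strat_bnd s Hp).
exact: memoryless_ok.
Qed.

Lemma vsel_W2 g s : is_selector G1 g -> inW2 G1 G2 delta T s -> vsel G2 delta T g s = 0.
Proof.
move=> H /eqP W; apply/eqP; rewrite eq_le; apply/andP; split.
  by rewrite -W; apply: vsel_le_val1.
by case/andP: (vsel_bnd s H).
Qed.

Lemma vsel_T g s : is_selector G1 g -> s \in T -> vsel G2 delta T g s = 1.
Proof.
move=> H sT; apply/eqP; rewrite eq_le; case/andP: (vsel_bnd s H) => _ -> /=.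
apply: inf_im_ge; first by exists u2; apply: u2_ok.
move=> p Hp; apply: le_trans (reachn_le_prob 0 s (memoryless_ok H) Hp).
by rewrite /= sT.
Qed.


Lemma reachn_ext p1 p2 q1 q2 n s0 h :
  (forall h, p1 s0 h = q1 s0 h) -> (forall h, p2 s0 h = q2 s0 h) ->
  reachn delta T p1 p2 n s0 h = reachn delta T q1 q2 n s0 h.
Proof.
move=> E1 E2; elim: n h => [|n IH] h //.
rewrite !reachnS E1 E2; case: ifP => // _.
by congr wsum; apply: boolp.funext => t; apply: IH.
Qed.

Lemma reachn_shift p1 p2 n s0 t h :
  reachn delta T p1 p2 n s0 (t :: h) =
  reachn delta T (fun _ h => p1 s0 (t :: h)) (fun _ h => p2 s0 (t :: h)) n t h.
Proof.
elim: n h => [|n IH] h //.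
rewrite !reachnS /=; case: ifP => // _.
by congr wsum; apply: boolp.funext => x; apply: IH.
Qed.

Lemma bellman g xi2 s : is_selector G1 g -> is_selector G2 xi2 -> s \notin T ->
  vsel G2 delta T g s <= Pre delta g xi2 (vsel G2 delta T g) s.
Proof.
move=> Hg Hxi sT; set v := vsel G2 delta T g.
have Hm := memoryless_ok Hg.
apply/ler_addgt0Pr => e e0.
have : forall t, exists p, is_strategy G2 p /\
    reach_prob delta T (memoryless g) p t < v t + e.
  move=> t; apply: inf_im_lt => //; by exists u2; apply: u2_ok.
case/boolp.choice => pt Hpt.
pose p2 : strategy R S M := fun s0 h =>
  match h with [::] => xi2 s0 | t :: h' => pt t t h' end.
have Hp2 : is_strategy G2 p2.
  by move=> s0 [|t h] /=; [apply: Hxi | case: (Hpt t) => H _; apply: H].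
apply: le_trans (val1_strat_le_prob s Hm Hp2) _.
apply: sup_im_le; first by exists 0%N.
have Pre0 : 0 <= Pre delta g xi2 v s.
  rewrite Pre_wsum; apply: wsum_ge0 => // t.
  by case/andP: (vsel_bnd t Hg).
case=> [|k] _.
  by rewrite /= (negbTE sT) addr_ge0 // ltW.
rewrite reachnS /= (negbTE sT) Pre_wsum.
have -> : wsum s (g s) (xi2 s) v + e = wsum s (g s) (xi2 s) (fun t => 1 * v t + e * 1).
  by rewrite wsum_lin wsum_const // mul1r mulr1.
apply: wsum_le => // t; rewrite mul1r mulr1.
rewrite reachn_shift.
rewrite (@reachn_ext _ _ (memoryless g) (pt t)); last by [].
  apply: le_trans (reachn_le_prob _ _ Hm (proj1 (Hpt t))) _.
  by apply: ltW; case: (Hpt t).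
by [].
Qed.


Lemma absorb0 s a b t : (s \in T) || inW2 G1 G2 delta T s -> a \in G1 s -> b \in G2 s ->
  t != s -> delta s a b t = 0.
Proof.
move=> Hs aG bG ts; case: (Hdelta aG bG) => H0 H1.
have : \sum_(t | t != s) delta s a b t = 0.
  by move: H1; rewrite (bigD1 s) //= (Habs Hs aG bG) -[RHS]addr0 => /addrI.
by move/psumr_eq0P => H; apply: H.
Qed.

Lemma wsum_absorb s x y X : (s \in T) || inW2 G1 G2 delta T s ->
  is_distr_on (G1 s) x -> is_distr_on (G2 s) y -> wsum s x y X = X s.
Proof.
move=> Hs Hx Hy; rewrite -[RHS](wsum_const (X s) Hx Hy).
apply: eq_bigr => a _; apply: eq_bigr => b _.
have [aG|aG] := boolP (a \in G1 s); last by rewrite (distr_out Hx aG) !mul0r.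
have [bG|bG] := boolP (b \in G2 s); last by rewrite (distr_out Hy bG) !mulr0 !mul0r.
congr (_ * _); rewrite (bigD1 s) //= [in RHS](bigD1 s) //= (Habs Hs aG bG).
by rewrite !big1 // => t ts; rewrite (absorb0 Hs aG bG ts) mul0r.
Qed.

Lemma Pre1_sel_ge g s : is_selector G1 g ->
  vsel G2 delta T g s <= Pre1_sel G2 delta g (vsel G2 delta T g) s.
Proof.
move=> Hg; apply: inf_im_ge; first by exists (uniform_sel R G2); apply: uniform_sel_ok.
move=> xi2 Hxi; have [sT|sT] := boolP (s \in T); last exact: bellman.
by rewrite Pre_wsum wsum_absorb ?sT.
Qed.

Lemma Pre_bnd xi1 xi2 v s : is_selector G1 xi1 -> is_selector G2 xi2 ->
  (forall t, 0 <= v t <= 1) -> 0 <= Pre delta xi1 xi2 v s <= 1.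
Proof.
move=> H1 H2 Hv; rewrite Pre_wsum wsum_ge0 ?wsum_le1 // => t; by case/andP: (Hv t).
Qed.

Lemma Pre1_sel_bnd xi1 v s : is_selector G1 xi1 ->
  (forall t, 0 <= v t <= 1) -> 0 <= Pre1_sel G2 delta xi1 v s <= 1.
Proof.
move=> H1 Hv; have U2 := uniform_sel_ok HG2; apply/andP; split.
  apply: inf_im_ge; first by exists (uniform_sel R G2).
  by move=> xi2 H2; case/andP: (Pre_bnd s H1 H2 Hv).
apply: le_trans (@inf_im_le _ _ _ _ 0 _ _ U2) _.
  by move=> xi2 H2; case/andP: (Pre_bnd s H1 H2 Hv).
by case/andP: (Pre_bnd s H1 U2 Hv).
Qed.

Lemma Pre1_sel_local g g' v s : g s = g' s ->
  Pre1_sel G2 delta g v s = Pre1_sel G2 delta g' v s.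
Proof.
move=> E; rewrite /Pre1_sel.
have -> : (fun xi2 => Pre delta g xi2 v s) = (fun xi2 => Pre delta g' xi2 v s).
  by apply: boolp.funext => xi2; rewrite !Pre_wsum E.
by [].
Qed.

Lemma le_Pre1 g v s : is_selector G1 g -> (forall t, 0 <= v t <= 1) ->
  Pre1_sel G2 delta g v s <= Pre1 G1 G2 delta v s.
Proof.
move=> Hg Hv; apply: (@le_sup_im _ _ _ (fun xi1 => Pre1_sel G2 delta xi1 v s) 1) => //.
by move=> xi1 H1; case/andP: (Pre1_sel_bnd s H1 Hv).
Qed.

Lemma Pre1_absorb v s : (s \in T) || inW2 G1 G2 delta T s ->
  Pre1 G1 G2 delta v s = v s.
Proof.
move=> Hs; have U1 := uniform_sel_ok HG1; have U2 := uniform_sel_ok HG2.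
have E : forall xi1, is_selector G1 xi1 -> Pre1_sel G2 delta xi1 v s = v s.
  move=> xi1 H1; apply/eqP; rewrite eq_le; apply/andP; split.
    apply: le_trans (@inf_im_le _ _ _ _ (v s) _ _ U2) _.
      by move=> xi2 H2; rewrite Pre_wsum wsum_absorb.
    by rewrite Pre_wsum wsum_absorb.
  apply: inf_im_ge; first by exists (uniform_sel R G2).
  by move=> xi2 H2; rewrite Pre_wsum wsum_absorb.
apply/eqP; rewrite eq_le; apply/andP; split.
  by apply: sup_im_le; [exists (uniform_sel R G1) | move=> xi1 H1; rewrite E].
rewrite -{1}(E _ U1); apply: (@le_sup_im _ _ _ (fun xi1 => Pre1_sel G2 delta xi1 v s) (v s)) => //.
by move=> xi1 H1; rewrite E.
Qed.


Fixpoint Ev (p1 p2 : strategy R S M) (c : R) (f : seq S -> R) (n : nat) (s0 : S)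
   (h : seq S) {struct n} : R :=
  if last s0 h \in T then c else
  match n with
  | 0 => f h
  | n'.+1 => wsum (last s0 h) (p1 s0 h) (p2 s0 h) (fun t => Ev p1 p2 c f n' s0 (rcons h t))
  end.

Section EvLemmas.
Variables (p1 p2 : strategy R S M) (s0 : S).
Hypotheses (H1 : is_strategy G1 p1) (H2 : is_strategy G2 p2).

Lemma EvS c f n h : Ev p1 p2 c f n.+1 s0 h = if last s0 h \in T then c else
  wsum (last s0 h) (p1 s0 h) (p2 s0 h) (fun t => Ev p1 p2 c f n s0 (rcons h t)).
Proof. by []. Qed.

Lemma Ev_reach n h : Ev p1 p2 1 (fun _ => 0) n s0 h = reachn delta T p1 p2 n s0 h.
Proof.
elim: n h => [|n IH] h //; rewrite EvS reachnS; case: ifP => // _.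
by congr wsum; apply: boolp.funext => t; apply: IH.
Qed.

Lemma Ev_split f n h :
  Ev p1 p2 1 f n s0 h = Ev p1 p2 1 (fun _ => 0) n s0 h + Ev p1 p2 0 f n s0 h.
Proof.
elim: n h => [|n IH] h; first by rewrite /=; case: ifP; rewrite ?addr0 ?add0r.
rewrite !EvS; case: ifP => _; first by rewrite addr0.
rewrite wsum_add.
by congr wsum; apply: boolp.funext => t; apply: IH.
Qed.

Lemma Ev_mono c f g n h : (forall h', last s0 h' \notin T -> f h' <= g h') ->
  Ev p1 p2 c f n s0 h <= Ev p1 p2 c g n s0 h.
Proof.
move=> fg; elim: n h => [|n IH] h.
  by rewrite /=; case: ifP => // /negbT; apply: fg.
rewrite !EvS; case: ifP => // _; apply: wsum_le; [exact: H1 | exact: H2 | move=> t; exact: IH].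
Qed.

Lemma Ev_bnd c f n h : 0 <= c <= 1 -> (forall h, 0 <= f h <= 1) ->
  0 <= Ev p1 p2 c f n s0 h <= 1.
Proof.
move=> Hc Hf; elim: n h => [|n IH] h.
  by rewrite /=; case: ifP.
rewrite EvS; case: ifP => // _.
by rewrite wsum_ge0 ?wsum_le1 //; try exact: H1; try exact: H2; move=> t; case/andP: (IH (rcons h t)).
Qed.

Lemma Ev_comp f n m h :
  Ev p1 p2 0 f (n + m) s0 h = Ev p1 p2 0 (fun h' => Ev p1 p2 0 f m s0 h') n s0 h.
Proof.
elim: n h => [|n IH] h.
  by rewrite add0n /=; case: ifP => // hT; case: m => /=; rewrite hT.
rewrite addSn !EvS; case: ifP => // _.
by congr wsum; apply: boolp.funext => t; apply: IH.
Qed.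

Lemma Ev_scale k f n h :
  Ev p1 p2 0 (fun h => k * f h) n s0 h = k * Ev p1 p2 0 f n s0 h.
Proof.
elim: n h => [|n IH] h; first by rewrite /=; case: ifP; rewrite ?mulr0.
rewrite !EvS; case: ifP => _; first by rewrite mulr0.
have -> : k * wsum (last s0 h) (p1 s0 h) (p2 s0 h)
    (fun t => Ev p1 p2 0 f n s0 (rcons h t)) =
  wsum (last s0 h) (p1 s0 h) (p2 s0 h)
    (fun t => k * Ev p1 p2 0 f n s0 (rcons h t) + 0 * Ev p1 p2 0 f n s0 (rcons h t)).
  by rewrite wsum_lin mul0r addr0.
by congr wsum; apply: boolp.funext => t; rewrite IH mul0r addr0.
Qed.

Lemma Ev_W2 f n h : inW2 G1 G2 delta T (last s0 h) ->
  (forall h', inW2 G1 G2 delta T (last s0 h') -> f h' = 0) ->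
  Ev p1 p2 0 f n s0 h = 0.
Proof.
move=> hW Hf; elim: n h hW => [|n IH] h hW.
  by rewrite /=; case: ifP => // _; apply: Hf.
rewrite EvS; case: ifP => // _.
rewrite wsum_absorb ?hW ?orbT //; try exact: H1; try exact: H2.
by apply: IH; rewrite last_rcons.
Qed.

End EvLemmas.


Section Sub.
Variables (g : selector R S M) (v : S -> R) (p2 : strategy R S M) (s0 : S).
Hypotheses (Hg : is_selector G1 g) (H2 : is_strategy G2 p2)
  (Hv : forall t, 0 <= v t <= 1).
Let vl := fun h : seq S => v (last s0 h).
Let E := Ev (memoryless g) p2.

Lemma sub_step n h : (forall t, v t <= E 1 vl n s0 (rcons h t)) ->
  last s0 h \notin T -> Pre1_sel G2 delta g v (last s0 h) <= E 1 vl n.+1 s0 h.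
Proof.
move=> Ht hT; rewrite /E EvS (negbTE hT).
set s := last s0 h.
pose xi2 : selector R S M := fun s' => if s' == s then p2 s0 h else uniform_sel R G2 s'.
have Hxi : is_selector G2 xi2.
  move=> s'; rewrite /xi2; case: eqP => [->|_]; first exact: H2.
  exact: uniform_distr.
apply: le_trans (@inf_im_le _ _ _ (fun xi2 => Pre delta g xi2 v s) 0 xi2 _ Hxi) _.
  by move=> x Hx; case/andP: (Pre_bnd s Hg Hx Hv).
rewrite Pre_wsum /xi2 eqxx.
apply: wsum_le => //; exact: H2.
Qed.

Hypothesis Hsub : forall t, v t <= Pre1_sel G2 delta g v t.

Lemma Ev_sub n h : v (last s0 h) <= E 1 vl n s0 h.
Proof.
elim: n h => [|n IH] h.
  by rewrite /E /=; case: ifP => _; [case/andP: (Hv (last s0 h)) | rewrite /vl].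
have [hT|hT] := boolP (last s0 h \in T).
  by rewrite /E EvS hT; case/andP: (Hv (last s0 h)).
apply: le_trans (Hsub _) (sub_step _ hT) => t.
by have := IH (rcons h t); rewrite last_rcons.
Qed.

End Sub.

Lemma reach_ge g v p2 s : is_selector G1 g -> is_strategy G2 p2 ->
  (forall t, 0 <= v t <= 1) ->
  (forall t, v t <= Pre1_sel G2 delta g v t) ->
  (forall t, inW2 G1 G2 delta T t -> v t = 0) ->
  (forall e, 0 < e -> exists n,
     Ev (memoryless g) p2 0 (fun h => (inU (last s h))%:R) n.+1 s [::] <= e) ->
  Pre1_sel G2 delta g v s <= reach_prob delta T (memoryless g) p2 s.
Proof.
move=> Hg H2 Hv Hsub HW Hdec.
have Hm := memoryless_ok Hg.
have [sT|sT] := boolP (s \in T).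
  apply: le_trans (reachn_le_prob 0 s Hm H2); rewrite /= sT.
  by case/andP: (Pre1_sel_bnd s Hg Hv).
apply/ler_addgt0Pr => e e0; case: (Hdec e e0) => n Hn.
apply: (@le_trans _ _ (reachn delta T (memoryless g) p2 n.+1 s [::] + e)).
  2: by rewrite lerD2r; apply: reachn_le_prob.
rewrite -Ev_reach.
have Hs : Pre1_sel G2 delta g v s <= Ev (memoryless g) p2 1 (fun h => v (last s h)) n.+1 s [::]
  := @sub_step g v p2 s Hg H2 Hv n [::] (fun t => @Ev_sub g v p2 s Hg H2 Hv Hsub n [:: t]) sT.
apply: le_trans Hs _.
rewrite (@Ev_split (memoryless g) p2 s (fun h => v (last s h))) lerD2l.
apply: le_trans Hn.
apply: (Ev_mono Hm H2).
move=> h' hT; have [W|W] := boolP (inW2 G1 G2 delta T (last s h')).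
  by rewrite HW // /inU W andbF.
by rewrite /inU hT W /=; case/andP: (Hv (last s h')).
Qed.


Fixpoint Att (g : selector R S M) (k : nat) : {set S} :=
  match k with
  | 0 => [set s | ~~ inU s]
  | k'.+1 => Att g k' :|: [set s | [forall b, (b \in G2 s) ==>
       [exists a, [exists t, [&& 0 < g s a, 0 < delta s a b t & t \in Att g k']]]]]
  end.

Definition stays (g : selector R S M) (C : {set S}) s b :=
  [forall a, [forall t, (0 < g s a) && (0 < delta s a b t) ==> (t \in C)]].

Definition trap (g : selector R S M) (C : {set S}) :=
  (forall s, s \in C -> inU s) /\
  (forall s, s \in C -> [exists b, (b \in G2 s) && stays g C s b]).

Definition proper (g : selector R S M) := forall C, trap g C -> forall s, s \notin C.

Lemma Att_mono g k m s : (k <= m)%N -> s \in Att g k -> s \in Att g m.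
Proof.
move=> km; elim: m km => [|m IH]; first by rewrite leqn0 => /eqP ->.
rewrite leq_eqVlt => /orP [/eqP -> //| ]; rewrite ltnS => km Hs.
by rewrite /= inE (IH km Hs).
Qed.

Lemma collect {X : finType} (P : X -> nat -> Prop) :
  (forall x k m, (k <= m)%N -> P x k -> P x m) -> (forall x, exists k, P x k) ->
  exists K, forall x, P x K.
Proof.
move=> Pm Pe.
suff : forall l : seq X, exists K, forall x, x \in l -> P x K.
  by case/(_ (enum X)) => K HK; exists K => x; apply: HK; rewrite mem_enum.
elim=> [|x l [K HK]]; first by exists 0%N.
case: (Pe x) => kx Hx; exists (maxn kx K) => y; rewrite inE => /orP [/eqP ->|yl].
  by apply: Pm Hx; rewrite leq_maxl.
by apply: Pm (HK y yl); rewrite leq_maxr.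
Qed.

Lemma Att_full g : proper g -> exists K, forall s, s \in Att g K.
Proof.
move=> Hp.
pose C : {set S} := finset (fun s => `[< forall k, s \notin Att g k >]).
have HC : trap g C.
  split=> s; rewrite inE => /boolp.asboolP Hs.
    by have := Hs 0%N; rewrite inE negbK.
  apply: contraT; rewrite negb_exists => /forallP Hn.
  have : exists K, forall b, b \in G2 s -> exists a t,
      [/\ 0 < g s a, 0 < delta s a b t & t \in Att g K].
    apply: (@collect _ (fun b K => b \in G2 s -> exists a t,
      [/\ 0 < g s a, 0 < delta s a b t & t \in Att g K])).
      move=> b k m km H bG; case: (H bG) => a [t [? ? ?]]; exists a, t; split => //.
      exact: Att_mono km _.
    move=> b; have [bG|bG] := boolP (b \in G2 s); last by exists 0%N.
    move: (Hn b); rewrite bG /= /stays negb_forall => /existsP [a].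
    rewrite negb_forall => /existsP [t]; rewrite negb_imply => /andP [/andP [ga dt]].
    rewrite inE => /boolp.asboolPn /boolp.existsNP [k tk0].
    have tk : t \in Att g k by apply/negPn/negP.
    by exists k => _; exists a, t.
  case=> K HK; have := Hs K.+1; rewrite /= inE negb_or => /andP [_].
  rewrite inE => /negP H; exfalso; apply: H; apply/forallP => b; apply/implyP => bG.
  case: (HK b bG) => a [t [ga dt tk]].
  by apply/existsP; exists a; apply/existsP; exists t; rewrite ga dt tk.
have : forall s, exists k, s \in Att g k.
  move=> s; have := Hp C HC s; rewrite inE => /boolp.asboolPn /boolp.existsNP [k Hk].
  by exists k; apply/negPn/negP.
apply: collect => s k m km; exact: Att_mono.
Qed.

Lemma min_pos {X : finType} (P : pred X) (f : X -> R) :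
  (forall x, P x -> 0 < f x) -> exists c, [/\ 0 < c, c <= 1 & forall x, P x -> c <= f x].
Proof.
move=> Hf.
suff : forall l : seq X, exists c, [/\ 0 < c, c <= 1 & forall x, x \in l -> P x -> c <= f x].
  by case/(_ (enum X)) => c [c0 c1 Hc]; exists c; split => // x; apply: Hc; rewrite mem_enum.
elim=> [|x l [c [c0 c1 Hc]]]; first by exists 1; split.
case Px: (P x).
  exists (Num.min c (f x)); split.
  - by rewrite lt_min c0 Hf.
  - by rewrite ge_min c1.
  move=> y; rewrite inE => /orP [/eqP -> _| yl Py]; first by rewrite ge_min lexx orbT.
  by rewrite ge_min Hc.
exists c; split => // y; rewrite inE => /orP [/eqP ->|yl Py]; first by rewrite Px.
exact: Hc.
Qed.


Lemma single_le {I : finType} (F : I -> R) j : (forall i, 0 <= F i) -> F j <= \sum_i F i.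
Proof. by move=> H; rewrite (bigD1 j) //= lerDl sumr_ge0. Qed.

Lemma term_ge0 s x y a b (Z : S -> R) : is_distr_on (G1 s) x -> is_distr_on (G2 s) y ->
  (forall t, 0 <= Z t) -> 0 <= x a * y b * \sum_t (delta s a b t * Z t).
Proof.
move=> Hx Hy HZ.
have [aG|aG] := boolP (a \in G1 s); last by rewrite (distr_out Hx aG) !mul0r.
have [bG|bG] := boolP (b \in G2 s); last by rewrite (distr_out Hy bG) !mulr0 !mul0r.
rewrite !mulr_ge0 ?(distr_ge0 _ Hx) ?(distr_ge0 _ Hy) // sumr_ge0 // => t _.
by rewrite mulr_ge0 //; case: (Hdelta aG bG) => H _; apply: H.
Qed.

Lemma wsum_ind_ge s x y (A : {set S}) c : is_distr_on (G1 s) x -> is_distr_on (G2 s) y ->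
  (forall b, b \in G2 s -> exists a t,
     [/\ a \in G1 s, t \in A & c <= x a * delta s a b t]) ->
  c <= wsum s x y (fun t => (t \in A)%:R).
Proof.
move=> Hx Hy Hb; rewrite /wsum exchange_big /=.
have Z0 : forall t, 0 <= (t \in A)%:R :> R by move=> t; rewrite ler0n.
apply: (@le_trans _ _ (\sum_b y b * c)).
  by rewrite -big_distrl /= (distr_sum Hy) mul1r.
apply: ler_sum => b _.
have [bG|bG] := boolP (b \in G2 s); last first.
  by rewrite (distr_out Hy bG) mul0r sumr_ge0 // => a _; rewrite mulr0 mul0r.
case: (Hb b bG) => a [t [aG tA Hc]].
apply: le_trans (single_le a (fun a => term_ge0 a b Hx Hy Z0)).
rewrite /=.
have D : 0 <= delta s a b t by case: (Hdelta aG bG) => H _; apply: H.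
apply: (@le_trans _ _ (x a * y b * (delta s a b t * (t \in A)%:R))).
  rewrite tA mulr1 [x a * y b]mulrC -mulrA.
  by apply: ler_wpM2l; [apply: (distr_ge0 _ Hy)|].
apply: ler_wpM2l; first by rewrite mulr_ge0 ?(distr_ge0 _ Hx) ?(distr_ge0 _ Hy).
apply: (single_le t (fun t => _)) => i.
by rewrite mulr_ge0 ?ler0n //; case: (Hdelta aG bG) => H _; apply: H.
Qed.

Lemma Ev_T p1 p2 c f n s0 h : last s0 h \in T -> Ev p1 p2 c f n s0 h = c.
Proof. by case: n => [|n] /= ->. Qed.

Section Decay.
Variables (g : selector R S M) (p2 : strategy R S M) (s0 : S).
Hypotheses (Hg : is_selector G1 g) (H2 : is_strategy G2 p2).
Let uU := fun h : seq S => (inU (last s0 h))%:R : R.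
Let E := Ev (memoryless g) p2 0 uU.
Variable c : R.
Hypotheses (c0 : 0 < c) (c1 : c <= 1)
  (Hc : forall s a b t, 0 < g s a -> b \in G2 s -> 0 < delta s a b t ->
     c <= g s a * delta s a b t).

Lemma uU_bnd h : 0 <= uU h <= 1.
Proof. by rewrite /uU; case: inU; rewrite ?ler01 ?lexx. Qed.

Lemma E_bnd n h : 0 <= E n s0 h <= 1.
Proof.
apply: (Ev_bnd s0 (memoryless_ok Hg) H2); [by rewrite lexx ler01 | exact: uU_bnd].
Qed.

Lemma E_nonU n h : ~~ inU (last s0 h) -> E n s0 h = 0.
Proof.
rewrite /inU negb_and !negbK => /orP [hT|hW]; first by rewrite /E Ev_T.
apply: (Ev_W2 (memoryless_ok Hg) H2 _ hW).
by move=> h' W; rewrite /uU /inU W andbF.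
Qed.

Lemma rank_bound k m h : (k <= m)%N -> last s0 h \in Att g k -> E m s0 h <= 1 - c ^+ k.
Proof.
elim: k m h => [|k IH] m h km.
  by rewrite /= inE => hU; rewrite E_nonU // expr0 subrr.
have ck : c ^+ k.+1 <= c ^+ k.
  by rewrite exprSr ler_piMr // exprn_ge0 // ltW.
have [hk|hk] := boolP (last s0 h \in Att g k).
  move=> _; apply: le_trans (IH m h (ltnW km) hk) _.
  by rewrite lerD2l lerN2.
rewrite /= inE (negbTE hk) /= inE => /forallP Hnew.
have hU : inU (last s0 h).
  by apply: contraT => hU; move: hk; rewrite (Att_mono (leq0n k)) //= inE.
have hT : last s0 h \notin T by case/andP: hU.
case: m km => [|m] // km.
rewrite /E EvS (negbTE hT).
set s := last s0 h.
have Hx : is_distr_on (G1 s) (memoryless g s0 h) by apply: Hg.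
have Hy : is_distr_on (G2 s) (p2 s0 h) by apply: H2.
apply: (@le_trans _ _ (wsum s (memoryless g s0 h) (p2 s0 h)
          (fun t => 1 * 1 + (- c ^+ k) * (t \in Att g k)%:R))).
  apply: wsum_le => // t.
  have [tk|tk] := boolP (t \in Att g k).
    rewrite /= mulr1n !mulr1.
    by have := IH m (rcons h t) km; rewrite last_rcons => /(_ tk).
  by rewrite /= mulr0n mulr0 addr0 mulr1; case/andP: (E_bnd m (rcons h t)).
rewrite wsum_lin wsum_const // ?mulr1 ?mul1r.
have W : c <= wsum s (memoryless g s0 h) (p2 s0 h) (fun t => (t \in Att g k)%:R).
  apply: wsum_ind_ge => // b bG.
  move: (Hnew b); rewrite bG /= => /existsP [a /existsP [t /and3P [ga dt tk]]].
  exists a, t; split => //; last exact: Hc.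
  by apply: contraT => aG; move: ga; rewrite (distr_out Hx aG) ltxx.
rewrite exprSr; have := exprn_ge0 k (ltW c0); nra.
Qed.

Lemma decay K : (forall s, s \in Att g K) -> forall j h, E (j * K) s0 h <= (1 - c ^+ K) ^+ j.
Proof.
move=> HK; elim=> [|j IH] h; first by rewrite mul0n expr0; case/andP: (E_bnd 0 h).
have d0 : 0 <= 1 - c ^+ K by rewrite subr_ge0 exprn_ile1 // ltW.
rewrite mulSn /E Ev_comp.
apply: (@le_trans _ _ (Ev (memoryless g) p2 0 (fun h' => (1 - c ^+ K) ^+ j * uU h') K s0 h)).
  apply: (Ev_mono (memoryless_ok Hg) H2) => h' hT.
  have [hU|hU] := boolP (inU (last s0 h')).
    by rewrite /uU hU mulr1; apply: IH.
  by rewrite /uU (negbTE hU) mulr0 -/E E_nonU.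
rewrite Ev_scale exprS mulrC; apply: ler_wpM2r; first exact: exprn_ge0.
by apply: rank_bound.
Qed.

End Decay.

Lemma bernoulli (d : R) j : 0 <= d <= 1 -> (1 - d) ^+ j * (1 + j%:R * d) <= 1.
Proof.
move=> /andP [d0 d1]; elim: j => [|j IH]; first by rewrite expr0 mul0r addr0 mulr1.
have a0 : 0 <= (1 - d) ^+ j by rewrite exprn_ge0 // subr_ge0.
have j0 : 0 <= j%:R :> R by rewrite ler0n.
rewrite exprS -mulrA -natr1.
have : 0 <= (1 - d) ^+ j * ((j%:R + 1) * d ^+ 2).
  by rewrite mulr_ge0 // mulr_ge0 // ?sqr_ge0 // addr_ge0.
set a := (1 - d) ^+ j in a0 IH *; set jr := j%:R in j0 IH *.
rewrite expr2; nra.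
Qed.

Lemma geom (d e : R) : 0 < d <= 1 -> 0 < e -> exists j, (1 - d) ^+ j <= e.
Proof.
move=> /andP [d0 d1] e0.
have x0 : 0 <= (d * e)^-1 by rewrite invr_ge0 mulr_ge0 // ltW.
set j := Num.Def.archi_bound (d * e)^-1.
have Hj := archi_boundP x0; rewrite -/j in Hj.
exists j.
have B := @bernoulli d j; rewrite ltW // d1 /= in B.
have a0 : 0 <= (1 - d) ^+ j by rewrite exprn_ge0 // subr_ge0.
have de0 : 0 < d * e by rewrite mulr_gt0.
have : 1 < j%:R * (d * e).
  by rewrite -ltr_pdivrMr // div1r.
set a := (1 - d) ^+ j in a0 B *; set jr := j%:R in Hj B *.
move=> H; nra.
Qed.


Definition pure (b : M) : {ffun M -> R} := [ffun b' => (b' == b)%:R].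

Lemma pure_distr s b : b \in G2 s -> is_distr_on (G2 s) (pure b).
Proof.
move=> bG; split.
- by move=> b'; rewrite ffunE ler0n.
- by move=> b' Hb; rewrite ffunE; case: eqP => // E; move: Hb; rewrite E bG.
rewrite (bigD1 b) //= ffunE eqxx big1 ?addr0 // => b' /negbTE nb.
by rewrite ffunE nb.
Qed.

Lemma pos_in A (x : {ffun M -> R}) a : is_distr_on A x -> 0 < x a -> a \in A.
Proof.
by move=> Hx xa; apply: contraT => aA; move: xa; rewrite (distr_out Hx aA) ltxx.
Qed.

Lemma exists_max {X : finType} (P : pred X) (f : X -> R) x0 :
  P x0 -> exists x, P x /\ forall y, P y -> f y <= f x.
Proof.
move=> Px0.
suff : forall l : seq X, exists x, P x /\ forall y, y \in l -> P y -> f y <= f x.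
  by case/(_ (enum X)) => x [Px Hx]; exists x; split => // y; apply: Hx; rewrite mem_enum.
elim=> [|y l [x [Px Hx]]]; first by exists x0.
case Py: (P y); last first.
  by exists x; split => // z; rewrite inE => /orP [/eqP ->|zl]; [rewrite Py | apply: Hx].
have [xy|yx] := leP (f x) (f y).
  exists y; split => // z; rewrite inE => /orP [/eqP -> //|zl Pz].
  exact: le_trans (Hx z zl Pz) xy.
exists x; split => // z; rewrite inE => /orP [/eqP -> _|zl]; [exact: ltW | exact: Hx].
Qed.

Lemma proper_uniform : proper (uniform_sel R G1).
Proof.
move=> C [CU Cst] s1; apply/negP => s1C.
set g := uniform_sel R G1.
pose bof s := [pick b | (b \in G2 s) && stays g C s b].
pose p2 : strategy R S M := fun s0 h =>
  match bof (last s0 h) with Some b => pure b | None => uniform_sel R G2 (last s0 h) end.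
have Hp2 : is_strategy G2 p2.
  move=> s0 h; rewrite /p2 /bof; case: pickP => [b /andP [bG _]|_]; first exact: pure_distr.
  exact: uniform_distr.
have Z : forall p1, is_strategy G1 p1 -> forall n s0 h, last s0 h \in C ->
    reachn delta T p1 p2 n s0 h = 0.
  move=> p1 H1; elim=> [|n IH] s0 h hC.
    by rewrite /= (negbTE (proj1 (andP (CU _ hC)))).
  rewrite reachnS (negbTE (proj1 (andP (CU _ hC)))).
  set s := last s0 h.
  have [b0 /andP [b0G b0st] Hpick] : exists2 b0, (b0 \in G2 s) && stays g C s b0 &
      p2 s0 h = pure b0.
    rewrite /p2 /bof -/s; case: pickP => [b Hb|Hn]; first by exists b.
    by case/existsP: (Cst s hC) => b Hb; move: (Hn b); rewrite Hb.
  rewrite /wsum Hpick big1 // => a _; apply: big1 => b _.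
  rewrite ffunE; case: eqP => [->|_]; last by rewrite mulr0 mul0r.
  have [xa|xa] := eqVneq (p1 s0 h a) 0; first by rewrite xa !mul0r.
  have xa0 : 0 < p1 s0 h a by rewrite lt_def xa; case: (H1 s0 h) => H _ _; apply: H.
  have aG := pos_in (H1 s0 h) xa0.
  rewrite big1 ?mulr0 // => t _.
  have d0 : 0 <= delta s a b0 t by case: (Hdelta aG b0G) => H _; apply: H.
  move: d0; rewrite le_eqVlt => /orP [/eqP <-|dt]; first by rewrite mul0r.
  have ga : 0 < g s a.
    by rewrite /g ffunE aG invr_gt0 ltr0n card_gt0 HG1.
  have tC : t \in C.
    by move/forallP: b0st => /(_ a) /forallP /(_ t); rewrite ga dt.
  by rewrite IH ?mulr0 // last_rcons.
have V : Defs.val1 G1 G2 delta T s1 <= 0.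
  apply: sup_im_le; first by exists u1; apply: u1_ok.
  move=> p1 H1; apply: le_trans (val1_strat_le_prob s1 H1 Hp2) _.
  by apply: sup_im_le; [exists 0%N | move=> n _; rewrite Z].
have W : inW2 G1 G2 delta T s1.
  by rewrite /inW2 eq_le V; case/andP: (val1_bnd s1).
by move: (CU _ s1C); rewrite /inU W andbF.
Qed.


Lemma wsum_pos_ge0 s x y Z : is_distr_on (G1 s) x -> is_distr_on (G2 s) y ->
  (forall a b t, 0 < x a -> 0 < y b -> 0 < delta s a b t -> 0 <= Z t) ->
  forall a b, 0 <= x a * y b * \sum_t (delta s a b t * Z t).
Proof.
move=> Hx Hy HZ a b.
have := distr_ge0 a Hx; rewrite le_eqVlt => /orP [/eqP <-|xa]; first by rewrite !mul0r.
have := distr_ge0 b Hy; rewrite le_eqVlt => /orP [/eqP <-|yb]; first by rewrite mulr0 !mul0r.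
have aG := pos_in Hx xa; have bG := pos_in Hy yb.
apply: mulr_ge0; first by rewrite mulr_ge0 // ltW.
apply: sumr_ge0 => t _.
have := (proj1 (Hdelta aG bG)) t; rewrite le_eqVlt => /orP [/eqP <-|dt]; first by rewrite mul0r.
by apply: mulr_ge0; [exact: ltW | exact: HZ a b t xa yb dt].
Qed.

Lemma wsum_zero s x y Z : is_distr_on (G1 s) x -> is_distr_on (G2 s) y ->
  (forall a b t, 0 < x a -> 0 < y b -> 0 < delta s a b t -> 0 <= Z t) ->
  wsum s x y Z <= 0 ->
  forall a b t, 0 < x a -> 0 < y b -> 0 < delta s a b t -> Z t = 0.
Proof.
move=> Hx Hy HZ Hle a b t xa yb dt.
have F0 := wsum_pos_ge0 Hx Hy HZ.
have W0 : wsum s x y Z = 0.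
  apply/eqP; rewrite eq_le Hle /= /wsum; apply: sumr_ge0 => a' _; apply: sumr_ge0 => b' _; exact: F0.
have Sa : \sum_b' (x a * y b' * \sum_t (delta s a b' t * Z t)) = 0.
  move: W0; rewrite /wsum => /psumr_eq0P; apply => // a' _.
  by apply: sumr_ge0 => b' _; apply: F0.
have Fab : x a * y b * \sum_t (delta s a b t * Z t) = 0.
  by move: Sa => /psumr_eq0P; apply => // b' _; apply: F0.
have aG := pos_in Hx xa; have bG := pos_in Hy yb.
have St : \sum_t (delta s a b t * Z t) = 0.
  by move/eqP: Fab; rewrite !mulf_eq0 (gt_eqF xa) (gt_eqF yb) /= => /eqP.
move: St => /psumr_eq0P H.
have : delta s a b t * Z t = 0.
  apply: H => // t' _.
  have := (proj1 (Hdelta aG bG)) t'; rewrite le_eqVlt => /orP [/eqP <-|dt']; first by rewrite mul0r.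
  by apply: mulr_ge0; [exact: ltW | exact: HZ a b t' xa yb dt'].
by move/eqP; rewrite mulf_eq0 (gt_eqF dt) /= => /eqP.
Qed.

Lemma proper_step g g' xi : is_selector G1 g -> is_selector G1 g' -> is_selector G1 xi ->
  proper g ->
  (forall s, inI' G1 G2 delta T g s ->
     Pre1_sel G2 delta xi (vsel G2 delta T g) s = Pre1 G1 G2 delta (vsel G2 delta T g) s) ->
  (forall s, g' s = if inI' G1 G2 delta T g s then xi s else g s) -> proper g'.
Proof.
move=> Hg Hg' Hxi Hp Hpre Hdef.
set v := vsel G2 delta T g.
have vb : forall t, 0 <= v t <= 1 by move=> t; apply: vsel_bnd.
have P1 : forall s, v s <= Pre1_sel G2 delta g' v s /\
    (inI' G1 G2 delta T g s -> v s < Pre1_sel G2 delta g' v s).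
  move=> s; have [I|I] := boolP (inI' G1 G2 delta T g s).
    rewrite (@Pre1_sel_local g' xi v s); last by rewrite Hdef I.
    rewrite Hpre //; move: (I) => /and3P [_ _ lt]; split => //; exact: ltW.
  rewrite (@Pre1_sel_local g' g v s); last by rewrite Hdef (negbTE I).
  by split => //; apply: Pre1_sel_ge.
move=> C [CU Cst] s1; apply/negP => s1C.
case: (@exists_max _ (fun s => s \in C) v s1 s1C) => ss [ssC ssmax].
set m := v ss.
pose Cm : {set S} := finset (fun s => (s \in C) && (v s == m)).
have HCm : trap g Cm.
  split=> s; rewrite inE => /andP [sC /eqP vs]; first exact: CU.
  case/existsP: (Cst s sC) => b /andP [bG st].
  pose xi2 : selector R S M := fun s' => if s' == s then pure b else uniform_sel R G2 s'.
  have Hxi2 : is_selector G2 xi2.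
    move=> s'; rewrite /xi2; case: eqP => [->|_]; [exact: pure_distr | exact: uniform_distr].
  have Hx : is_distr_on (G1 s) (g' s) by apply: Hg'.
  have Hy : is_distr_on (G2 s) (pure b) by apply: pure_distr.
  have HP : Pre1_sel G2 delta g' v s <= wsum s (g' s) (pure b) v.
    apply: le_trans (@inf_im_le _ _ _ (fun xi2 => Pre delta g' xi2 v s) 0 xi2 _ Hxi2) _.
      by move=> x H; case/andP: (Pre_bnd s Hg' H vb).
    by rewrite Pre_wsum /xi2 eqxx.
  have HZ : forall a b' t, 0 < g' s a -> 0 < pure b b' -> 0 < delta s a b' t ->
      0 <= 1 * m + (-1) * v t.
    move=> a b' t ga; rewrite ffunE; case: eqP => [->|]; last by rewrite ltxx.
    move=> _ dt; have tC : t \in C.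
      by move/forallP: st => /(_ a) /forallP /(_ t); rewrite ga dt.
    by rewrite mul1r mulN1r subr_ge0; apply: ssmax.
  have Hle : wsum s (g' s) (pure b) (fun t => 1 * m + (-1) * v t) <= 0.
    rewrite wsum_lin wsum_const // mul1r mulN1r subr_le0 -vs.
    exact: le_trans (proj1 (P1 s)) HP.
  have Hge : 0 <= wsum s (g' s) (pure b) (fun t => 1 * m + (-1) * v t).
    apply: sumr_ge0 => a _; apply: sumr_ge0 => b' _; exact: wsum_pos_ge0.
  have NI : ~~ inI' G1 G2 delta T g s.
    apply/negP => I; have := proj2 (P1 s) I.
    move: Hge; rewrite wsum_lin wsum_const // mul1r mulN1r subr_ge0 => Hw.
    by rewrite vs; move=> H; move: (lt_le_trans H (le_trans HP Hw)); rewrite ltxx.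
  have gs : g' s = g s by rewrite Hdef (negbTE NI).
  apply/existsP; exists b; rewrite bG /=.
  apply/forallP => a; apply/forallP => t; apply/implyP => /andP [ga dt].
  rewrite -gs in ga.
  have tC : t \in C.
    by move/forallP: st => /(_ a) /forallP /(_ t); rewrite ga dt.
  have := wsum_zero Hx Hy HZ Hle ga _ dt; rewrite ffunE eqxx ltr01 => /(_ isT).
  rewrite mul1r mulN1r => /eqP; rewrite subr_eq0 => /eqP vt.
  by rewrite inE tC -vt eqxx.
have := Hp Cm HCm ss; rewrite inE ssC eqxx.
by [].
Qed.


Lemma P1_lemma g g' xi : is_selector G1 g ->
  (forall s, inI' G1 G2 delta T g s ->
     Pre1_sel G2 delta xi (vsel G2 delta T g) s = Pre1 G1 G2 delta (vsel G2 delta T g) s) ->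
  (forall s, g' s = if inI' G1 G2 delta T g s then xi s else g s) ->
  forall s, vsel G2 delta T g s <= Pre1_sel G2 delta g' (vsel G2 delta T g) s /\
    (inI' G1 G2 delta T g s -> vsel G2 delta T g s < Pre1_sel G2 delta g' (vsel G2 delta T g) s).
Proof.
move=> Hg Hpre Hdef s; set v := vsel G2 delta T g.
have [I|I] := boolP (inI' G1 G2 delta T g s).
  rewrite (@Pre1_sel_local g' xi v s); last by rewrite Hdef I.
  rewrite Hpre //; move: (I) => /and3P [_ _ lt]; split => //; exact: ltW.
rewrite (@Pre1_sel_local g' g v s); last by rewrite Hdef (negbTE I).
by split => //; apply: Pre1_sel_ge.
Qed.

Lemma main (gamma : nat -> selector R S M) (i : nat)
  (H0 : forall s, gamma 0%N s = @uniform_sel R S M G1 s)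
  (Hstep : forall j, (j <= i)%N ->
            improve_step G1 G2 delta T (gamma j) (gamma j.+1)) :
  let vi := vsel G2 delta T (gamma i) in
  let vi1 := vsel G2 delta T (gamma i.+1) in
  [/\ forall s, Pre1 G1 G2 delta vi s <= vi1 s,
      forall s, vi s <= vi1 s &
      forall s, Pre1 G1 G2 delta vi s > vi s -> vi1 s > vi s].
Proof.
have Sel : forall j, (j <= i.+1)%N -> is_selector G1 (gamma j) /\ proper (gamma j).
  elim=> [|j IH] Hj.
    have -> : gamma 0%N = uniform_sel R G1 by apply: boolp.funext.
    by split; [apply: uniform_sel_ok | apply: proper_uniform].
  case: (IH (ltnW Hj)) => Hs Hp.
  case: (Hstep j Hj) => xi [Hxi Hpre Hdef].
  have Hs' : is_selector G1 (gamma j.+1).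
    by move=> s; rewrite Hdef; case: ifP => _; [apply: Hxi | apply: Hs].
  by split => //; apply: proper_step Hs Hs' Hxi Hp Hpre Hdef.
case: (Sel i (leqnSn i)) => Hg _.
case: (Sel i.+1 (leqnn _)) => Hg' Hp'.
case: (Hstep i (leqnn i)) => xi [Hxi Hpre Hdef].
set g := gamma i; set g' := gamma i.+1.
rewrite -/g -/g' in Hdef Hpre Hg Hg' Hp'.
move=> vi vi1; rewrite -/g -/g' in vi vi1 *.
set v := vsel G2 delta T g.
have vb : forall t, 0 <= v t <= 1 by move=> t; apply: vsel_bnd.
have P1 := P1_lemma Hg Hpre Hdef.
have Hle : forall s, Pre1 G1 G2 delta v s <= Pre1_sel G2 delta g' v s.
  move=> s; have [I|I] := boolP (inI' G1 G2 delta T g s).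
    by rewrite (@Pre1_sel_local g' xi v s) ?Hpre // Hdef I.
  have [A|A] := boolP ((s \in T) || inW2 G1 G2 delta T s).
    by rewrite Pre1_absorb //; apply: (proj1 (P1 s)).
  move: I; rewrite /inI' -/v; move: A; rewrite negb_or => /andP [-> ->] /=.
  by rewrite -leNgt => H; apply: le_trans H (proj1 (P1 s)).
case: (Att_full Hp') => K HK.
have HK' : forall s, s \in Att g' K.+1 by move=> s; apply: Att_mono (HK s).
pose P := fun x : S * M * M * S => let: (s, a, b, t) := x in
  [&& 0 < g' s a, b \in G2 s & 0 < delta s a b t].
pose f := fun x : S * M * M * S => let: (s, a, b, t) := x in g' s a * delta s a b t.
have [c [c0 c1 Hcx]] : exists c, [/\ 0 < c, c <= 1 & forall x, P x -> c <= f x].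
  apply: min_pos => [[[[s a] b] t]] /= /and3P [ga _ dt]; exact: mulr_gt0.
have Hc : forall s a b t, 0 < g' s a -> b \in G2 s -> 0 < delta s a b t ->
    c <= g' s a * delta s a b t.
  by move=> s a b t ga bG dt; apply: (Hcx (s, a, b, t)); rewrite /P ga bG dt.
have key : forall s, Pre1 G1 G2 delta v s <= vi1 s.
  move=> s; apply: inf_im_ge; first by exists u2; apply: u2_ok.
  move=> p2 H2; apply: le_trans (Hle s) _.
  apply: reach_ge => //.
  - by move=> t; apply: (proj1 (P1 t)).
  - by move=> t; apply: vsel_W2.
  move=> e e0.
  have d0 : 0 < c ^+ K.+1 <= 1 by rewrite exprn_gt0 // exprn_ile1 // ltW.
  case: (geom d0 e0) => j Hj.
  exists (j + j.+1 * K)%N.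
  have -> : (j + j.+1 * K).+1 = (j.+1 * K.+1)%N by rewrite mulnS addSn.
  apply: le_trans (decay s Hg' H2 c0 c1 Hc HK' j.+1 [::]) _.
  apply: le_trans Hj; rewrite exprSr.
  case/andP: d0 => dp d1.
  have a0 : 0 <= (1 - c ^+ K.+1) ^+ j by rewrite exprn_ge0 // subr_ge0.
  set a := (1 - c ^+ K.+1) ^+ j in a0 *; set d := c ^+ K.+1 in dp d1 *.
  nra.
have ge : forall s, vi s <= Pre1 G1 G2 delta vi s.
  move=> s0; apply: le_trans (Pre1_sel_ge s0 Hg) _; exact: le_Pre1.
split => // s0.
  exact: le_trans (ge s0) (key s0).
by move=> H; apply: lt_le_trans H (key s0).
Qed.

End Dev.

Unset Implicit Arguments.
Set Strict Implicit.

Theorem lemma8 (R : realType) (S M : finType)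
  (G1 G2 : S -> {set M}) (delta : S -> M -> M -> {ffun S -> R}) (T : {set S})
  (HG1 : forall s, G1 s != finset.set0) (HG2 : forall s, G2 s != finset.set0)
  (Hdelta : forall s a b, a \in G1 s -> b \in G2 s -> is_pdistr (delta s a b))
  (Habs : forall s, (s \in T) || inW2 G1 G2 delta T s ->
            forall a b, a \in G1 s -> b \in G2 s -> delta s a b s = 1)
  (gamma : nat -> selector R S M) (i : nat)
  (H0 : forall s, gamma 0%N s = @uniform_sel R S M G1 s)
  (Hstep : forall j, (j <= i)%N ->
            improve_step G1 G2 delta T (gamma j) (gamma j.+1)) :
  let vi := vsel G2 delta T (gamma i) in
  let vi1 := vsel G2 delta T (gamma i.+1) in
  [/\ forall s, Pre1 G1 G2 delta vi s <= vi1 s,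
      forall s, vi s <= vi1 s &
      forall s, Pre1 G1 G2 delta vi s > vi s -> vi1 s > vi s].
Proof.
exact: (main HG1 HG2 Hdelta Habs H0 Hstep).
Qed.
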